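(* Let $n\ge 2$ and $\alpha_1,\dots,\alpha_n\in\mathbb{R}$. (a) Let $D$ be the $n\times n$ Euclidean distance matrix of the points $\alpha_1\mathbf{e}_1,\dots,\alpha_n\mathbf{e}_n\in\mathbb{R}^n$ (an axis simplex), i.e. $D_{ij}=\sqrt{\alpha_i^2+\alpha_j^2}$ for $i\neq j$. (b) Let $D'$ be the $(n+1)\times(n+1)$ distance matrix of the points $\mathbf{0},\alpha_1\mathbf{e}_1,\dots,\alpha_n\mathbf{e}_n$ (a simplex with an orthogonal corner), i.e. $D'_{ij}=\sqrt{\alpha_i^2+\alpha_j^2}$ for $i\ne j\in\{0,\dots,n\}$ with $\alpha_0=0$. Assume in each case that the off-diagonal entries are pairwise distinct. Then for every $k>0$ and all $t\in[0,1]$, the $k$-th Betti curve of $D$ (resp. $D'$) is identically zero.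
   Context: Betti curves of a symmetric matrix. Let $M$ be a real symmetric $n\times n$ matrix whose $\binom{n}{2}$ off-diagonal entries $M_{ij}$ ($i<j$) are pairwise distinct. The ordering matrix $\widehat{M}$ is defined by $\widehat{M}_{ij}=k$ if $M_{ij}$ is the $k$-th smallest off-diagonal entry. For $t\in[0,1]$, $G_t=G_t(M)$ is the graph on vertex set $\{1,\dots,n\}$ with edge set $\{\{i,j\} : \widehat{M}_{ij}\le t\binom{n}{2}\}$ (so edges are added in increasing order of the entries $M_{ij}$; $G_0$ has no edges and $G_1$ is complete). $X(G_t)$ is the clique complex of $G_t$ (every $k$-clique of $G_t$ is filled in by a $(k-1)$-dimensional simplex). The $i$-th Betti curve of $M$ is $\beta_i(t)=\operatorname{rank} H_i(X(G_t);\mathbf{k})$, with $H_i$ simplicial homology with coefficients in a fixed field $\mathbf{k}$. $\mathbf{e}_1,\dots,\mathbf{e}_n$ denote the standard basis vectors of $\mathbb{R}^n$. *)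

(* Defs.v *)
From HB Require Import structures.
From mathcomp Require Import all_boot all_order all_algebra.
From mathcomp Require Import reals.
Set Implicit Arguments. Unset Strict Implicit. Unset Printing Implicit Defensive.
Import Order.TTheory GRing.Theory Num.Theory.
Local Open Scope ring_scope.

Definition simplices (m : nat) (E : rel 'I_m) (k : nat) : {set {set 'I_m}} :=
  [set s : {set 'I_m} | (#|s| == k.+1)%N &&
     [forall x in s, forall y in s, (x != y) ==> E x y]].

(* Coefficient of the face t in the boundary of the simplex s, with vertices
   oriented by the natural order of 'I_m:  d[v_0..v_k] = sum_i (-1)^i [..^v_i..]. *)
Definition bd_coef (F : pzRingType) (m : nat) (s t : {set 'I_m}) : F :=
  \sum_(v in s | t == s :\ v) (-1) ^+ #|[set u in s | (val u < val v)%N]|.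

(* Matrix of the boundary map d_{k+1} : C_{k+1} -> C_k (row-vector convention:
   rows indexed by (k+1)-simplices, columns by k-simplices). *)
Definition bdmx (F : fieldType) (m : nat) (E : rel 'I_m) (k : nat)
  : 'M[F]_(#|simplices E k.+1|, #|simplices E k|) :=
  \matrix_(i, j) bd_coef F (enum_val i) (enum_val j).

(* rank H_k(X(G); F) = dim C_k - rank d_k - rank d_{k+1}  (d_0 = 0). *)
Definition betti (F : fieldType) (m : nat) (E : rel 'I_m) (k : nat) : nat :=
  (#|simplices E k| - \rank (bdmx F E k)
     - (if k is k'.+1 then \rank (bdmx F E k') else 0))%N.

Section Curves.
Variable R : realType.

Definition ordhat (m : nat) (M : 'M[R]_m) (i j : 'I_m) : nat :=
  (#|[set p : 'I_m * 'I_m | (val p.1 < val p.2)%N && (M p.1 p.2 < M i j)]|).+1.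

Definition Gt (m : nat) (M : 'M[R]_m) (t : R) : rel 'I_m :=
  fun i j => (i != j) && ((ordhat M i j)%:R <= t * ('C(m, 2))%:R).

Definition betti_curve (F : fieldType) (m : nat) (M : 'M[R]_m) (k : nat) (t : R) : nat :=
  betti F (Gt M t) k.

Definition offdiag_distinct (m : nat) (M : 'M[R]_m) : Prop :=
  forall i j i' j' : 'I_m, (val i < val j)%N -> (val i' < val j')%N ->
    M i j = M i' j' -> i = i' /\ j = j'.

Definition edm (m d : nat) (p : 'I_m -> 'rV[R]_d) : 'M[R]_m :=
  \matrix_(i, j) Num.sqrt (\sum_(l < d) (p i 0 l - p j 0 l) ^+ 2).

Definition axis_pts (n : nat) (alpha : 'I_n -> R) (i : 'I_n) : 'rV[R]_n :=
  alpha i *: delta_mx 0 i.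

Definition corner_pts (n : nat) (alpha : 'I_n -> R) (i : 'I_n.+1) : 'rV[R]_n :=
  match unlift ord0 i with Some j => axis_pts alpha j | None => 0 end.

End Curves.

(* Main.v *)
Require Import Defs.
From HB Require Import structures.
From mathcomp Require Import all_boot all_order all_algebra.
From mathcomp Require Import reals ring.
Import Order.TTheory GRing.Theory Num.Theory.
Local Open Scope ring_scope.
Set Implicit Arguments. Unset Strict Implicit. Unset Printing Implicit Defensive.

Section Comb.
Variable F : fieldType.
Variable m : nat.

Lemma eqsetP (A B : {set 'I_m}) : A =i B -> A = B.
Proof. by move/finset.setP. Qed.

Definition cnt (s : {set 'I_m}) (v : 'I_m) : nat := #|[set u in s | (val u < val v)%N]|.

Lemma cntU1 (A : {set 'I_m}) x y : x \notin A ->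
  cnt (x |: A) y = (cnt A y + (val x < val y))%N.
Proof.
move=> xA; rewrite /cnt; case: (ltnP (val x) (val y)) => hxy.
  have -> : [set u in x |: A | (val u < val y)%N] = x |: [set u in A | (val u < val y)%N].
    by apply: eqsetP=> u; rewrite !inE; case: (u =P x) => // ->; rewrite hxy.
  by rewrite cardsU1 inE (negPf xA) addnC.
rewrite addn0; apply: eq_card=> u; rewrite !inE.
by case: (u =P x) => // ->; rewrite ltnNge hxy /= andbF.
Qed.

Lemma cnt_self (A : {set 'I_m}) v : cnt (A :\ v) v = cnt A v.
Proof.
rewrite /cnt; apply: eq_card=> u; rewrite !inE.
by case: (eqVneq u v) => [->|]; rewrite ?ltnn ?andbF.
Qed.

Lemma bd_del (s : {set 'I_m}) w : w \in s -> bd_coef F s (s :\ w) = (-1) ^+ cnt s w.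
Proof.
move=> ws; rewrite /bd_coef (big_pred1 w) // => v /=.
apply/andP/eqP => [[vs /eqP e]|->]; last by rewrite ws.
apply/eqP/negPn/negP => nvw.
have : w \in s :\ v by rewrite !inE eq_sym nvw ws.
by rewrite -e !inE eqxx.
Qed.

Lemma bd_zero (s t : {set 'I_m}) : (forall w, w \in s -> t != s :\ w) -> bd_coef F s t = 0.
Proof.
move=> h; rewrite /bd_coef big_pred0 // => v; apply/andP=> [[vs /eqP e]].
by move: (h v vs); rewrite e eqxx.
Qed.

Lemma sign_sq a : (-1) ^+ a * (-1) ^+ a = 1 :> F.
Proof. by rewrite -expr2 sqrr_sign. Qed.

Lemma sum_only (T : finType) (A : pred T) x0 (f : T -> F) :
  (forall x, x != x0 -> f x = 0) -> (x0 \notin A -> f x0 = 0) ->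
  \sum_(x in A) f x = f x0.
Proof.
move=> h1 h2; case: (boolP (x0 \in A)) => xA.
  rewrite (bigD1 x0) //= big1 ?addr0 // => x /andP[_]; exact: h1.
by rewrite big1 ?h2 // => x xA'; apply: h1; apply: contraNneq xA => <-.
Qed.

Variable E : rel 'I_m.
Variable v : 'I_m.
Hypothesis cone : forall y z, y != v -> z != v -> E y z -> E v y && E y v.

Definition eps (t : {set 'I_m}) : F := (-1) ^+ cnt t v.
Definition hc (t p : {set 'I_m}) : F := if (v \notin t) && (p == v |: t) then eps t else 0.

Lemma cone_simp k (s : {set 'I_m}) : s \in simplices E k.+1 -> v \notin s ->
  v |: s \in simplices E k.+2.
Proof.
rewrite !inE => /andP[/eqP cs /forallP cl] vs.
rewrite cardsU1 vs cs eqxx /=.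
have adj : forall y, y \in s -> E v y && E y v.
  move=> y ys.
  have : (1 < #|s|)%N by rewrite cs.
  rewrite (cardsD1 y) ys add1n ltnS card_gt0 => /set0Pn [z]; rewrite !inE => /andP[zy zs].
  have yv : y != v by apply: contraNneq vs => <-.
  have zv : z != v by apply: contraNneq vs => <-.
  apply: (cone yv zv).
  by move/(_ y): cl; rewrite ys /= => /forallP/(_ z); rewrite zs eq_sym zy.
apply/forallP=> x; apply/implyP => hx.
apply/forallP=> y; apply/implyP => hy.
case/setU1P: hx => [-> | xs]; case/setU1P: hy => [-> | ys]; apply/implyP => nxy.
- by rewrite eqxx in nxy.
- by case/andP: (adj y ys).
- by case/andP: (adj x xs).
- by move/(_ x): cl; rewrite xs /= => /forallP/(_ y); rewrite ys nxy.
Qed.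

Lemma del_simp k (s : {set 'I_m}) : s \in simplices E k.+1 -> v \in s ->
  s :\ v \in simplices E k.
Proof.
rewrite !inE => /andP[/eqP cs /forallP cl] vs.
rewrite (cardsD1 v) vs in cs; rewrite add1n in cs; case: cs => ->; rewrite eqxx /=.
apply/forallP=> x; apply/implyP; rewrite !inE => /andP[_ xs].
apply/forallP=> y; apply/implyP; rewrite !inE => /andP[_ ys].
by move/(_ x): cl; rewrite xs /= => /forallP/(_ y); rewrite ys.
Qed.

Definition Hmx k : 'M[F]_(#|simplices E k|, #|simplices E k.+1|) :=
  \matrix_(i, j) hc (enum_val i) (enum_val j).

Lemma HB_entry k (s r : {set 'I_m}) : s \in simplices E k.+1 ->
  \sum_(p in simplices E k.+2) hc s p * bd_coef F p r =
  if v \notin s then eps s * bd_coef F (v |: s) r else 0.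
Proof.
move=> sS; rewrite (sum_only _ (x0 := v |: s)).
- by rewrite /hc eqxx andbT; case: (v \notin s) => //; rewrite mul0r.
- by move=> x nx; rewrite /hc (negPf nx) andbF mul0r.
move=> nS; rewrite /hc; case vs: (v \notin s); last by rewrite mul0r.
by rewrite (cone_simp sS vs) in nS.
Qed.

Lemma BH_entry k (s r : {set 'I_m}) : r \in simplices E k.+1 ->
  \sum_(p in simplices E k) bd_coef F s p * hc p r =
  if v \in r then bd_coef F s (r :\ v) * eps (r :\ v) else 0.
Proof.
move=> rS; rewrite (sum_only _ (x0 := r :\ v)).
- rewrite /hc !inE eqxx /=; case vr: (v \in r).
    by rewrite setD1K // eqxx.
  case: eqP => [e|]; last by rewrite mulr0.
  by move: vr; rewrite e setU11.
- move=> x nx; rewrite /hc; case: ifP; last by rewrite mulr0.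
  case/andP=> vx /eqP e; move: nx; rewrite e setU1K // eqxx //.
move=> nS; rewrite /hc; case vr: (v \in r).
  by rewrite (del_simp rS vr) in nS.
rewrite !inE eqxx /=; case: eqP => [e|]; last by rewrite mulr0.
by move: vr; rewrite e setU11.
Qed.


Lemma setU1D1 (s : {set 'I_m}) w : w != v -> (v |: s) :\ w = v |: (s :\ w).
Proof.
move=> wv; apply: eqsetP => u; rewrite !inE.
case: (eqVneq u v) => [->|]; last by [].
by rewrite eq_sym wv.
Qed.

Lemma key (s r : {set 'I_m}) :
  (if v \notin s then eps s * bd_coef F (v |: s) r else 0) +
  (if v \in r then bd_coef F s (r :\ v) * eps (r :\ v) else 0) = (s == r)%:R.
Proof.
case: (eqVneq s r) => [<-|nsr].
  case vs: (v \in s) => /=.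
    by rewrite add0r bd_del // /eps cnt_self sign_sq.
  have := bd_del (setU11 v s); rewrite setU1K ?vs // => ->.
  by rewrite addr0 /eps cntU1 ?vs // ltnn addn0 sign_sq.
case vs: (v \in s) => /=.
  rewrite add0r; case vr: (v \in r); last by [].
  rewrite bd_zero ?mul0r // => w ws; apply/eqP => e.
  case: (eqVneq w v) => [wv|wv].
    move: e; rewrite wv => e; move: nsr.
    by rewrite -(setD1K vs) -e setD1K // eqxx.
  have : v \in s :\ w by rewrite !inE eq_sym wv vs.
  by rewrite -e !inE eqxx.
case vr: (v \in r); last first.
  rewrite addr0 bd_zero ?mulr0 // => w; case/setU1P => [->|ws].
    by rewrite setU1K ?vs // eq_sym.
  apply/eqP => e; have : v \in r.
    by rewrite e !inE eqxx andbT; apply: contraFN vs => /eqP ->.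
  by rewrite vr.
case: (pickP (fun w => (w \in s) && (r == (v |: s) :\ w))) => [w /andP[ws /eqP rE] | none].
  have wv : w != v by apply: contraFN vs => /eqP <-.
  have rv : r :\ v = s :\ w by rewrite rE setU1D1 // setU1K // !inE vs andbF.
  have e1 : bd_coef F (v |: s) r = (-1) ^+ cnt (v |: s) w by rewrite rE bd_del // setU1r.
  have e2 : bd_coef F s (r :\ v) = (-1) ^+ cnt s w by rewrite rv bd_del.
  rewrite e1 e2 rv.
  have h : cnt s v = (cnt (s :\ w) v + (val w < val v))%N.
    by rewrite -{1}(setD1K ws) cntU1 // !inE eqxx.
  rewrite /eps cntU1 ?vs // -(cnt_self s w) h.
  rewrite !exprD; case: (ltngtP (val v) (val w)) => hvw; rewrite ?expr1 ?expr0.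
  - ring.
  - ring.
  - by case/eqP: wv; apply: val_inj.
rewrite bd_zero ?mulr0; last first.
  move=> w; case/setU1P => [->|ws].
    by rewrite setU1K ?vs // eq_sym.
  by move: (none w); rewrite ws /= => ->.
rewrite bd_zero ?mul0r ?addr0 // => w ws; apply/eqP => e.
have wv : w != v by apply: contraFN vs => /eqP <-.
move: (none w); rewrite ws /= setU1D1 // -e setD1K ?eqxx //.
Qed.

Lemma homotopy k :
  Hmx k.+1 *m bdmx F E k.+1 + bdmx F E k *m Hmx k = 1%:M.
Proof.
apply/matrixP => i j; rewrite !mxE.
under eq_bigr do rewrite !mxE.
under [X in _ + X = _]eq_bigr do rewrite !mxE.
rewrite -(big_enum_val (fun p => hc (enum_val i) p * bd_coef F p (enum_val j))).
rewrite -(big_enum_val (fun p => bd_coef F (enum_val i) p * hc p (enum_val j))).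
rewrite (HB_entry _ (enum_valP i)) (BH_entry _ (enum_valP j)) key.
by rewrite (inj_eq enum_val_inj).
Qed.

Lemma betti0 k : (0 < k)%N -> betti F E k = 0%N.
Proof.
case: k => // k _; rewrite /betti.
apply/eqP; rewrite -subnDA subn_eq0.
have := mxrank_add (Hmx k.+1 *m bdmx F E k.+1) (bdmx F E k *m Hmx k).
rewrite homotopy mxrank1 => h; apply: (leq_trans h).
by apply: leq_add; [apply: mxrankM_maxr | apply: mxrankM_maxl].
Qed.
End Comb.
Section Geo.
Variable R : realType.

Lemma exists_min m (f : 'I_m -> R) : (0 < m)%N -> exists v, forall i, f v <= f i.
Proof.
move=> hm; pose i0 := Ordinal hm.
case: (arg_minP (i0 := i0) (P := xpredT) f isT) => v _ h.
by exists v => i; apply: h.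
Qed.

Variables (m d : nat) (a : 'I_m -> R) (g : 'I_m -> 'I_d) (p : 'I_m -> 'rV[R]_d).
Hypothesis hp : forall i, p i = a i *: delta_mx 0 (g i).
Hypothesis hg : forall i j, i != j -> [|| g i != g j, a i == 0 | a j == 0].

Lemma edm_val i j : i != j -> edm p i j = Num.sqrt (a i ^+ 2 + a j ^+ 2).
Proof.
move=> nij; rewrite mxE; congr Num.sqrt.
have -> : \sum_(l < d) (p i 0 l - p j 0 l) ^+ 2 =
   \sum_(l < d) ((if l == g i then a i ^+ 2 else 0) + (if l == g j then a j ^+ 2 else 0)).
  apply: eq_bigr => l _; rewrite !hp !mxE /=.
  case: (eqVneq l (g i)) => [eli|nli]; case: (eqVneq l (g j)) => [elj|nlj] /=.
  - move: (hg nij); rewrite -eli -elj eqxx /= => /orP[] /eqP ->; ring.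
  - ring.
  - ring.
  - ring.
rewrite big_split /= -!big_mkcond /= !big_pred1_eq //.
Qed.

Lemma ordhat_mono (M : 'M[R]_m) i j i' j' : M i j <= M i' j' -> (ordhat M i j <= ordhat M i' j')%N.
Proof.
move=> h; rewrite /ordhat ltnS; apply: subset_leq_card; apply/subsetP => q.
by rewrite !inE => /andP[-> hq] /=; apply: lt_le_trans h.
Qed.

Variable v : 'I_m.
Hypothesis vmin : forall i, a v ^+ 2 <= a i ^+ 2.

Lemma cone_Gt t : forall y z, y != v -> z != v -> Gt (edm p) t y z ->
  Gt (edm p) t v y && Gt (edm p) t y v.
Proof.
move=> y z yv zv /andP[yz hyz].
have hle : forall b, b != y -> b != z -> (a b ^+ 2 <= a z ^+ 2) ->
   (Gt (edm p) t b y) && (Gt (edm p) t y b).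
  move=> b by' bz hb; have yb : y != b by rewrite eq_sym.
  rewrite /Gt by' yb /=.
  have e1 : edm p b y <= edm p y z.
    rewrite (edm_val by') (edm_val yz) ler_sqrt; last by rewrite addr_ge0 ?sqr_ge0.
    by rewrite addrC lerD2l.
  have e2 : edm p y b <= edm p y z.
    rewrite (edm_val yb) (edm_val yz) ler_sqrt; last by rewrite addr_ge0 ?sqr_ge0.
    by rewrite lerD2l.
  by rewrite !(le_trans _ hyz) // ler_nat ordhat_mono.
apply: hle => //; first by rewrite eq_sym.
by rewrite eq_sym.
Qed.
End Geo.

Theorem mainTheorem3 (R : realType) (F : fieldType) (n : nat) (alpha : 'I_n -> R) :
  (2 <= n)%N ->
  (offdiag_distinct (edm (axis_pts alpha)) ->
     forall (k : nat) (t : R), (0 < k)%N -> 0 <= t <= 1 ->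
       betti_curve F (edm (axis_pts alpha)) k t = 0%N) /\
  (offdiag_distinct (edm (corner_pts alpha)) ->
     forall (k : nat) (t : R), (0 < k)%N -> 0 <= t <= 1 ->
       betti_curve F (edm (corner_pts alpha)) k t = 0%N).
Proof.
move=> hn; have n0 : (0 < n)%N by apply: leq_trans hn.
split => _ k t hk _.
  have [v hv] := exists_min (fun i => alpha i ^+ 2) n0.
  rewrite /betti_curve.
  apply: (@betti0 F _ _ v _ k hk).
  apply: (@cone_Gt R _ _ alpha id (axis_pts alpha) _ _ v hv t) => //.
  by move=> i j ->.
pose j0 : 'I_n := Ordinal n0.
pose a (i : 'I_n.+1) := oapp alpha 0 (unlift ord0 i).
pose g (i : 'I_n.+1) := oapp id j0 (unlift ord0 i).
have [v hv] := exists_min (fun i => a i ^+ 2) (ltn0Sn n).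
rewrite /betti_curve.
apply: (@betti0 F _ _ v _ k hk).
apply: (@cone_Gt R _ _ a g (corner_pts alpha) _ _ v hv t).
- move=> i; rewrite /corner_pts /a /g; case: (unlift ord0 i) => //=.
  by rewrite scale0r.
- move=> i j; rewrite /a /g.
  case: (unliftP ord0 i) => [i' ei|ei]; case: (unliftP ord0 j) => [j' ej|ej] /=.
  + by rewrite ei ej (inj_eq lift_inj) => ->.
  + by rewrite eqxx !orbT.
  + by rewrite eqxx !orbT.
  + by rewrite ei ej eqxx.
Qed.
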